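(* Let $G=(V,E)$ be a finite simple strongly connected directed graph with a fixed total order on $V$. For every $v\in V$, there is exactly one spanning tree $\mathbf a$ of $G$ rooted at $v$ with $\psi(\mathbf a)=V$; that is, $m(V,v)=1$.
   Context: A spanning tree of $G$ is a subgraph on all vertices with no cycle, one vertex (root) of outdegree $0$ and all others of outdegree $1$. Exploration algorithm (depends on the fixed total order of $V$). Input: a spanning tree $\mathbf a$ rooted at $v$. Initialize $A=\{v\}$, $F=\{e: s(e)\neq v\}$, $\mathbf L$ = FIFO list of edges with target $v$, by increasing source. While $\mathbf L$ is nonempty, take its first edge $e$, with source $w$: if $e\in\mathbf a$, add $w$ to $A$, delete from $\mathbf L$ (and $F$) all edges with source $w$, and append to $\mathbf L$ all edges of $F$ with target $w$ by increasing source; otherwise delete from $\mathbf L$ and $F$ all edges with source or target $w$. At the end $\phi(\mathbf a)=A$ and $\psi(\mathbf a)$ is the strongly connected component of $v$ in the induced graph $G_{\phi(\mathbf a)}$. For $W$ strongly connected and $w\in W$, $m(W,w)$ is the number of spanning trees rooted at $w$ with $\psi(\mathbf a)=W$. *)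

(* Defs.v *)
From mathcomp Require Import all_boot.
Set Implicit Arguments. Unset Strict Implicit. Unset Printing Implicit Defensive.

Section Exploration.
Variables (V : finType) (e : rel V) (r : rel V).
(* e : edge relation of the directed graph G; an edge is a pair (s,t) with e s t.
   r : the fixed total order on V (as a "less or equal" relation). *)

Definition edges : {set V * V} := [set p | e p.1 p.2].

Definition sort_by_source (s : seq (V * V)) : seq (V * V) :=
  sort (fun f g => r f.1 g.1) s.

Definition spanning_tree (a : {set V * V}) (v : V) : bool :=
  [&& a \subset edges,
      #|[set f in a | f.1 == v]| == 0,
      [forall x, (x != v) ==> (#|[set f in a | f.1 == x]| == 1)] &
      [forall x, forall y, ((x, y) \in a) ==>
         ~~ connect [rel p q | (p, q) \in a] y x]].

Definition state := ({set V} * {set V * V} * seq (V * V))%type.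

Definition init_state (v : V) : state :=
  ([set v], [set f in edges | f.1 != v],
   sort_by_source [seq f <- enum edges | f.2 == v]).

Definition explore_step (a : {set V * V}) (st : state) : state :=
  let: (A, F, L) := st in
  match L with
  | [::] => st
  | f0 :: _ =>
    let w := f0.1 in
    if f0 \in a then
      let F' := [set f in F | f.1 != w] in
      (w |: A, F',
       [seq f <- L | f.1 != w] ++ sort_by_source [seq f <- enum F' | f.2 == w])
    else
      ( A, [set f in F | (f.1 != w) && (f.2 != w)],
        [seq f <- L | (f.1 != w) && (f.2 != w)])
  end.

(* Each step with nonempty list removes at least one edge from F (the
   processed one), so #|V * V|.+1 iterations reach the terminal state
   (empty list), which is a fixpoint of explore_step. *)
Definition explore (a : {set V * V}) (v : V) : state :=
  iter #|{: V * V}|.+1 (explore_step a) (init_state v).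

Definition phi (a : {set V * V}) (v : V) : {set V} := (explore a v).1.1.

Definition scc_in (W : {set V}) (v : V) : {set V} :=
  let eW := [rel x y | [&& e x y, x \in W & y \in W]] in
  [set x in W | connect eW v x && connect eW x v].

Definition psi (a : {set V * V}) (v : V) : {set V} := scc_in (phi a v) v.

(* m(W, w): number of spanning trees rooted at w with psi = W.
   (The root of a spanning tree is determined by the tree.) *)
Definition m_count (W : {set V}) (w : V) : nat :=
  #|[set a : {set V * V} | spanning_tree a w && (psi a w == W)]|.

End Exploration.

(* Main.v *)
Require Import Defs.
From mathcomp Require Import all_boot zify.
Set Implicit Arguments. Unset Strict Implicit. Unset Printing Implicit Defensive.

Section Proof.
Variables (V : finType) (e : rel V) (r : rel V).
Hypothesis e_irr : irreflexive e.
Hypothesis e_sc : forall x y : V, connect e x y.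
Variable v : V.

Notation E := (edges e).
Notation step := (explore_step r).

Definition stA (st : state V) := st.1.1.
Definition stF (st : state V) := st.1.2.
Definition stL (st : state V) := st.2.

Definition Inv (st : state V) :=
  [/\ v \in stA st,
      forall f, f \in stL st -> f \in stF st,
      forall f, f \in stF st -> f \in E,
      forall f, f \in stF st -> f.1 \notin stA st &
      forall f, f \in stL st -> f.2 \in stA st].

Lemma mem_sort_src s f : (f \in sort_by_source r s) = (f \in s).
Proof. by rewrite /sort_by_source mem_sort. Qed.

Lemma step_ext (a b : {set V * V}) st :
  (forall f L, stL st = f :: L -> (f \in a) = (f \in b)) -> step a st = step b st.
Proof. by case: st => [[A F] [|f L]] //= H; rewrite (H f L). Qed.

Lemma step_nil (a : {set V * V}) st : stL st = [::] -> step a st = st.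
Proof. by case: st => [[A F] L] /= ->. Qed.

Lemma step_cons (a : {set V * V}) A F f0 L : step a (A, F, f0 :: L) =
  if f0 \in a then
    (f0.1 |: A, [set f in F | f.1 != f0.1],
     [seq f <- f0 :: L | f.1 != f0.1] ++
       sort_by_source r [seq f <- enum [set f in F | f.1 != f0.1] | f.2 == f0.1])
  else (A, [set f in F | (f.1 != f0.1) && (f.2 != f0.1)],
        [seq f <- f0 :: L | (f.1 != f0.1) && (f.2 != f0.1)]).
Proof. by []. Qed.

Lemma Inv_step (a : {set V * V}) st : Inv st -> Inv (step a st).
Proof.
case: st => [[A F] [|f0 L]] //.
rewrite step_cons; have f0L := mem_head f0 L; move: (f0 :: L) f0L => L' f0L.
rewrite /Inv /stA /stF /stL /= => -[vA LF FE FA LA].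
case: ifP => _ /=; split.
- by rewrite in_setU1 vA orbT.
- move=> f; rewrite mem_cat mem_filter mem_sort_src mem_filter mem_enum !inE.
  case/orP => [/andP[-> /LF ->] //|/andP[_ /andP[-> ->]] //].
- by move=> f; rewrite inE => /andP[/FE].
- move=> f; rewrite !inE => /andP[/FA fA fw]; by rewrite negb_or fw fA.
- move=> f; rewrite mem_cat mem_filter mem_sort_src mem_filter inE.
  case/orP => [/andP[_ /LA fA]|/andP[/eqP f2 _]]; by rewrite ?fA ?f2 ?inE ?eqxx ?orbT.
- exact: vA.
- move=> f; rewrite mem_filter !inE => /andP[-> /LF ->] //.
- by move=> f; rewrite inE => /andP[/FE].
- by move=> f; rewrite inE => /andP[/FA].
- by move=> f; rewrite mem_filter => /andP[_ /LA].
Qed.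

Lemma card_step (a : {set V * V}) st : Inv st -> stL st != [::] -> #|stF (step a st)| < #|stF st|.
Proof.
case: st => [[A F] [|f0 L]] //.
rewrite step_cons => -[vA LF FE FA LA] _.
have f0F : f0 \in F by apply: (LF f0); rewrite /= inE eqxx.
apply: proper_card; apply/properP; case: ifP => _; rewrite /stF /=; split.
- by apply/subsetP => f; rewrite inE => /andP[].
- by exists f0; rewrite // inE eqxx andbF.
- by apply/subsetP => f; rewrite inE => /andP[].
- by exists f0; rewrite // !inE eqxx andbF.
Qed.

Definition run (a : {set V * V}) n := iter n (step a) (init_state e r v).
Definition N := #|{: V * V}|.+1.

Lemma Inv_init : Inv (init_state e r v).
Proof.
rewrite /Inv /init_state /stA /stF /stL /=; split.
- by rewrite inE.
- move=> f; rewrite mem_sort_src mem_filter mem_enum inE => /andP[/eqP f2 fE].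
  rewrite !inE fE /=; apply/eqP => f1; move: fE; rewrite f1 f2 e_irr.
  done.
- by move=> f; rewrite inE => /andP[].
- by move=> f; rewrite !inE => /andP[].
- by move=> f; rewrite mem_sort_src mem_filter => /andP[/eqP -> _]; rewrite inE.
Qed.

Lemma Inv_run (a : {set V * V}) n : Inv (run a n).
Proof. elim: n => [|n IH]; [exact: Inv_init | exact: Inv_step]. Qed.

Lemma term (a : {set V * V}) n : stL (run a n) = [::] \/ #|stF (run a n)| + n <= #|stF (run a 0)|.
Proof.
elim: n => [|n IH]; first by right; rewrite addn0.
case E0: (stL (run a n)) => [|f L].
  by left; rewrite /run iterS -/(run a n) step_nil.
case: IH => [|H]; first by rewrite E0.
right; have := card_step a (Inv_run a n); rewrite E0 => /(_ isT).
rewrite /run iterS -/(run a n) => H2; move: H H2; rewrite /run /=; lia.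
Qed.

Lemma term_N (a : {set V * V}) : stL (run a N) = [::].
Proof.
case: (term a N) => // H; exfalso.
have : #|stF (run a 0)| <= #|{: V * V}| by apply: max_card.
rewrite /N in H; lia.
Qed.

Lemma run_fix (a : {set V * V}) k : run a (k + N) = run a N.
Proof.
elim: k => // k IH; rewrite addSn /run iterS -/(run a (k + N)) IH.
exact: step_nil (term_N a).
Qed.


Definition J (st : state V) :=
  (forall f, f \in E -> f.2 \in stA st -> f.1 \notin stA st -> f \in stL st) /\
  (forall f, f \in E -> f.1 \notin stA st -> f \in stF st).

Lemma J_step (a : {set V * V}) st : Inv st -> J st ->
  (forall f L, stL st = f :: L -> f \in a) -> J (step a st).
Proof.
case: st => [[A F] [|f0 L]]; first by move=> _ H _.
move=> I0 J0 /(_ f0 L erefl) f0a; move: I0 J0.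
rewrite step_cons f0a; have f0L := mem_head f0 L; move: (f0 :: L) f0L => L' f0L.
rewrite /Inv /J /stA /stF /stL /= => -[vA LF FE FA LA] [J1 J2]; split.
- move=> f fE; rewrite !in_setU1 => f2 /norP[f1w f1A].
  rewrite mem_cat mem_filter mem_sort_src mem_filter mem_enum inE.
  case/orP: f2 => [f2w | f2A]; first by rewrite f2w J2 // f1w orbT.
  by rewrite J1 // f1w.
- move=> f fE; rewrite in_setU1 => /norP[f1w f1A]; by rewrite inE J2 // f1w.
Qed.

Definition gstate := (state V * {set V * V} * (V -> nat))%type.
Definition gstep (g : gstate) : gstate :=
  let: (st, T, rk) := g in
  if stL st is f0 :: _ then
    (step (f0 |: T) st, f0 |: T, fun z => if z == f0.1 then #|stA st| else rk z)
  else g.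

Definition K (g : gstate) := let: (st, T, rk) := g in
 [/\ forall f, f \in T -> f \in E,
     forall x, #|[set f in T | f.1 == x]| = ((x \in stA st) && (x != v)),
     forall f, f \in T -> [/\ f.1 \in stA st, f.2 \in stA st & rk f.2 < rk f.1] &
     forall z, z \in stA st -> rk z < #|stA st|].

Lemma K_step (g : gstate) : Inv g.1.1 -> K g -> K (gstep g).
Proof.
case: g => [[[[A F] [|f0 L]] T] rk] //=.
rewrite setU11 /stA /= => -[vA LF FE FA LA] [TE TK TR Trk].
have f0F : f0 \in F := LF f0 (mem_head _ _).
have wA : f0.1 \notin A := FA _ f0F.
have xA : f0.2 \in A := LA _ (mem_head _ _).
have xw : f0.2 != f0.1 by apply/eqP => ew; move: wA; rewrite -ew xA.
split.
- move=> f; rewrite in_setU1 => /orP[/eqP->|/TE//]; exact: FE.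
- move=> x; case: (eqVneq x f0.1) => [->|xnw].
  + have -> : [set f in f0 |: T | f.1 == f0.1] = [set f0].
      apply/setP => f; rewrite !inE; case: (eqVneq f f0) => [->|ff0] /=; first by rewrite eqxx.
      apply/negbTE/negP => /andP[fT /eqP f1]; case: (TR f fT) => fA _ _.
      by move: wA; rewrite -f1 fA.
    rewrite cards1 in_setU1 eqxx /=; have -> // : f0.1 != v by apply/eqP => vw; move: wA; rewrite vw vA.
  + have -> : [set f in f0 |: T | f.1 == x] = [set f in T | f.1 == x].
      apply/setP => f; rewrite !inE; case: (eqVneq f f0) => [->|ff0] //=.
      by rewrite eq_sym (negbTE xnw) andbF.
    by rewrite TK in_setU1 (negbTE xnw).
- move=> f; rewrite [f \in _]in_setU1 => /orP[/eqP->|fT].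
  + by rewrite !in_setU1 eqxx xA orbT (negbTE xw) Trk.
  + case: (TR f fT) => f1A f2A lt.
    have f1w : f.1 != f0.1 by apply/eqP => ew; move: wA; rewrite -ew f1A.
    have f2w : f.2 != f0.1 by apply/eqP => ew; move: wA; rewrite -ew f2A.
    by rewrite !in_setU1 f1A f2A !orbT (negbTE f1w) (negbTE f2w).
- move=> z; rewrite in_setU1 cardsU1 wA /= => /orP[/eqP->|zA].
    by rewrite eqxx add1n ltnSn.
  case: eqP => _; first by rewrite add1n ltnSn.
  by apply: ltn_trans (Trk _ zA) _; rewrite add1n ltnSn.
Qed.

Lemma gstep_st (g : gstate) : exists a : {set V * V}, (gstep g).1.1 = step a g.1.1 /\
  (forall f L, stL g.1.1 = f :: L -> f \in a).
Proof.
case: g => [[[[A F] [|f0 L]] T] rk].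
  by exists set0; split.
exists (f0 |: T); split => // f L2 [-> _]; exact: setU11.
Qed.

Definition g0 : gstate := (init_state e r v, set0, fun _ => 0).
Definition gn n := iter n gstep g0.

Lemma J_init : J (init_state e r v).
Proof.
rewrite /J /init_state /stA /stF /stL /=; split.
- move=> f fE; rewrite inE => /eqP f2 _.
  by rewrite mem_sort_src mem_filter mem_enum f2 eqxx fE.
- move=> f fE; rewrite inE => f1; by rewrite inE fE.
Qed.

Lemma K_init : K g0.
Proof.
rewrite /K /g0 /init_state /stA /=; split => //.
- by move=> f; rewrite in_set0.
- move=> x; have -> : [set f in (set0 : {set V * V}) | f.1 == x] = set0.
    by apply/setP => f; rewrite !inE.
  by rewrite cards0 inE; case: eqP.
- by move=> f; rewrite in_set0.
- by move=> z _; rewrite cards1.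
Qed.

Lemma gInv n : [/\ Inv (gn n).1.1, J (gn n).1.1 & K (gn n)].
Proof.
elim: n => [|n [I1 J1 K1]]; first by split; [exact: Inv_init|exact: J_init|exact: K_init].
rewrite /gn iterS -/(gn n); have [a [-> Ha]] := gstep_st (gn n).
split; [exact: Inv_step | exact: J_step | exact: K_step].
Qed.

Lemma gT_step (g : gstate) : g.1.2 \subset (gstep g).1.2.
Proof.
case: g => [[[[A F] [|f0 L]] T] rk] /=; [exact: subxx | exact: subsetUr].
Qed.

Lemma gT_mono n m : n <= m -> (gn n).1.2 \subset (gn m).1.2.
Proof.
elim: m => [|m IH]; first by rewrite leqn0 => /eqP->.
rewrite leq_eqVlt ltnS => /orP[/eqP->|/IH H]; first exact: subxx.
apply: subset_trans H _; rewrite /gn iterS; exact: gT_step.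
Qed.

Lemma ghead n f L : stL (gn n).1.1 = f :: L -> f \in (gn n.+1).1.2.
Proof.
rewrite /gn iterS -/(gn n); case: (gn n) => [[[[A F] [|f0 L0]] T] rk] //= [-> _].
exact: setU11.
Qed.

Definition aG := (gn N).1.2.

Lemma gproj n : n <= N -> (gn n).1.1 = run aG n.
Proof.
elim: n => // n IH Hn.
rewrite /gn iterS -/(gn n) /run iterS -/(run aG n) -IH ?(ltnW Hn) //.
have Hh := @ghead n; move: Hh.
case E0: (gn n) => [[[[A F] [|f0 L]] T] rk] Hh //.
apply: step_ext => f L2 /= [<- _]; rewrite setU11; apply/esym.
apply: (subsetP (gT_mono Hn)); exact: (Hh f0 L erefl).
Qed.

Lemma closed_all (A : {set V}) : v \in A ->
  (forall f, f \in E -> f.2 \in A -> f.1 \in A) -> A = setT.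
Proof.
move=> vA H; apply/setP => u; rewrite in_setT.
have /connectP [p pth lst] := e_sc u v.
elim: p u pth lst => [|y p IH] u /=; first by move=> _ <-.
case/andP => euy pth lst; have yA := IH y pth lst.
by apply: (H (u, y)); rewrite // inE.
Qed.

Lemma rank_acyc (T : {set V * V}) (rk : V -> nat) :
  (forall f, f \in T -> rk f.2 < rk f.1) ->
  forall x y, (x, y) \in T -> ~~ connect [rel p q | (p, q) \in T] y x.
Proof.
move=> H x y xy; apply/negP => /connectP [p pth lst].
have key : forall p y, path [rel p q | (p, q) \in T] y p -> x = last y p -> rk x <= rk y.
  elim=> [|z q IH] y0 /=; first by move=> _ ->.
  case/andP => yz pth2 lst2; apply: leq_trans (IH _ pth2 lst2) _.
  exact: ltnW (H (y0, z) yz).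
have := key _ _ pth lst; have := H _ xy; rewrite /=; lia.
Qed.

Lemma aG_A : stA (run aG N) = setT.
Proof.
rewrite -gproj //; have [I1 [J1 _] _] := gInv N.
have LN : stL (gn N).1.1 = [::] by rewrite gproj // term_N.
case: I1 => vA _ _ _ _; apply: closed_all => // f fE f2A.
by apply/negPn/negP => f1A; have := J1 f fE f2A f1A; rewrite LN.
Qed.

Lemma psi_of a : stA (run a N) = setT -> psi e r a v = setT.
Proof.
rewrite /psi /phi /explore -/N -/(run a N) /stA => ->.
apply/setP => x; rewrite /scc_in !inE.
have EC : connect [rel x y | [&& e x y, x \in [set: V] & y \in [set: V]]] =2 connect e.
  by apply: eq_connect => p q; rewrite /= !in_setT !andbT.
by rewrite !EC !e_sc.
Qed.

Lemma phi_of a : psi e r a v = setT -> stA (run a N) = setT.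
Proof.
move=> H; apply/eqP; rewrite eqEsubset subsetT /=; apply/subsetP => x _.
have : x \in psi e r a v by rewrite H in_setT.
by rewrite /psi /scc_in inE => /andP[].
Qed.

Lemma aG_tree : spanning_tree e aG v.
Proof.
have [_ _] := gInv N; rewrite /K /aG; case: (gn N) (gproj (leqnn N)) => [[st T] rk] /= Est.
have AT : stA st = setT by rewrite Est aG_A.
case => TE TK TR _; apply/and4P; split.
- by apply/subsetP.
- by rewrite TK eqxx andbF.
- by apply/forallP => x; apply/implyP => xv; rewrite TK AT in_setT xv.
- apply/forallP => x; apply/forallP => y; apply/implyP => xy.
  apply: (rank_acyc (rk := rk)) => // f fT; by case: (TR f fT).
Qed.


Definition Kw (w : V) (st : state V) :=
  w \notin stA st /\ forall f, f \in stF st -> f.1 != w.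

Lemma Kw_step (a : {set V * V}) w st : Inv st -> Kw w st -> Kw w (step a st).
Proof.
case: st => [[A F] [|f0 L]]; first by move=> _ H.
rewrite step_cons /Inv /Kw /stA /stF /stL => -[vA LF FE FA LA] [wA Fw].
have f0w := Fw f0 (LF f0 (mem_head _ _)).
case: ifP => _ /=; split.
- by rewrite in_setU1 negb_or wA andbT eq_sym.
- by move=> f; rewrite inE => /andP[/Fw].
- exact: wA.
- by move=> f; rewrite inE => /andP[/Fw].
Qed.

Lemma heads (a : {set V * V}) : psi e r a v = setT ->
  forall n f L, stL (run a n) = f :: L -> f \in a.
Proof.
move=> Hp n f L Hn; apply/negPn/negP => fa.
have K1 : Kw f.1 (run a n.+1).
  rewrite /run iterS -/(run a n); have := Inv_run a n.
  case: (run a n) Hn => [[A F] L0]; rewrite {1}/stL /= => ->.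
  rewrite (negbTE fa) /Inv /Kw /stA /stF /stL /= => -[vA LF FE FA LA]; split.
  + exact: FA (LF f (mem_head _ _)).
  + by move=> g; rewrite inE => /andP[_ /andP[]].
have K2 : forall k, Kw f.1 (run a (k + n.+1)).
  elim=> // k IH; rewrite addSn /run iterS -/(run a (k + n.+1)).
  exact: Kw_step (Inv_run _ _) IH.
have [+ _] := K2 N; rewrite addnC run_fix (phi_of Hp) in_setT //.
Qed.

Lemma run_eq (a b : {set V * V}) : psi e r a v = setT -> psi e r b v = setT ->
  forall n, run a n = run b n.
Proof.
move=> Ha Hb; elim=> // n IH.
rewrite /run !iterS -/(run a n) -/(run b n) IH; apply: step_ext => f L E0.
rewrite (heads Hb E0); apply: (heads Ha (n := n) (L := L)); by rewrite IH.
Qed.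

Lemma addedA (a : {set V * V}) n x : x \in stA (run a n) ->
  x = v \/ exists k f L, [/\ stL (run a k) = f :: L, f \in a & f.1 = x].
Proof.
elim: n => [|n IH]; first by rewrite /run /init_state /stA /= inE => /eqP; left.
rewrite /run iterS -/(run a n).
case E0: (run a n) IH => [[A F] [|f0 L]] IH //.
rewrite step_cons; case: ifP => f0a; rewrite /stA /=.
- rewrite in_setU1 => /orP[/eqP ->|xA]; last by apply: IH.
  right; exists n, f0, L; split => //; by rewrite -/(run a n) E0.
- exact: IH.
Qed.

Lemma uniq_sub (a b : {set V * V}) : spanning_tree e a v -> spanning_tree e b v ->
  psi e r a v = setT -> psi e r b v = setT -> a \subset b.
Proof.
move=> /and4P[_ a0 a1 _] _ Ha Hb; apply/subsetP => -[x y] xya.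
have : x \in stA (run a N) by rewrite (phi_of Ha) in_setT.
case/addedA => [xv | [k [f [L [Ek fa f1]]]]].
  move: a0; rewrite cards_eq0 => /eqP /setP /(_ (x, y)).
  by rewrite !inE xya xv eqxx.
have fb : f \in b by apply: (heads Hb (n := k) (L := L)); rewrite -(run_eq Ha Hb).
have xv : x != v.
  apply/eqP => xv; move: a0; rewrite cards_eq0 => /eqP /setP /(_ (x, y)).
  by rewrite !inE xya xv eqxx.
move/forallP: a1 => /(_ x) /implyP /(_ xv) /cards1P [g Hg].
have : f \in [set f in a | f.1 == x] by rewrite inE fa f1 eqxx.
have : (x, y) \in [set f in a | f.1 == x] by rewrite inE xya eqxx.
by rewrite Hg !inE => /eqP -> /eqP <-.
Qed.

End Proof.

Theorem lemma3p1 (V : finType) (e : rel V) (r : rel V)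
  (e_irr : irreflexive e)
  (r_total : total r) (r_trans : transitive r) (r_anti : antisymmetric r)
  (e_sc : forall x y : V, connect e x y)
  (v : V) :
  m_count e r [set: V] v = 1.
Proof.
rewrite /m_count.
have -> : [set a : {set V * V} | spanning_tree e a v && (psi e r a v == [set: V])]
          = [set aG e r v].
  apply/setP => a; rewrite !inE.
  have T0 := aG_tree r e_irr e_sc v.
  have P0 := psi_of e_sc (aG_A r e_irr e_sc v).
  apply/andP/eqP => [[Ta /eqP Pa] | ->]; last by rewrite T0 P0.
  apply/eqP; rewrite eqEsubset.
  by rewrite (uniq_sub e_irr Ta T0 Pa P0) (uniq_sub e_irr T0 Ta P0 Pa).
exact: cards1.
Qed.
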